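(* Let $X$ be a paracompact topologically complete space and let $\mathcal A$ be a cofinal subfamily of the family of all closed, locally finite, normal covers of $X$ (i.e. every closed, locally finite, normal cover of $X$ is refined by some member of $\mathcal A$). With $\Lambda$, $N_\lambda\subset F_\lambda$ and $\pi^\mu_\lambda$ as in the context, for each $\lambda\in\Lambda$ there exists $\mu\in\Lambda$ with $\mu\supseteq\lambda$ such that $\pi^\mu_\lambda(F_\mu)\subset N_\lambda$. In particular, the system of inclusions $(N_\lambda\hookrightarrow F_\lambda;\lambda\in\Lambda)$ is an isomorphism in the category pro-Top between the inverse systems $(N_\lambda,\pi^\mu_\lambda;\Lambda)$ and $(F_\lambda,\pi^\mu_\lambda;\Lambda)$.
   Context: A topologically complete space is a Tychonoff space complete with respect to its finest uniformity. A closed, locally finite, normal cover $\alpha$ of $X$ is a locally finite cover by closed sets admitting a partition of unity $\{\phi_{\alpha,V}:V\in\alpha\}$ with $\mathrm{cl}(\phi_{\alpha,V}^{-1}((0,1]))\subset\mathrm{int}(V)$, $\sum_V\phi_{\alpha,V}=1$. Construction: $\Lambda$ is the set of finite subsets of $\mathcal A$ directed by inclusion. For $\lambda\in\Lambda$, $N^{(0)}_\lambda$ is the set of functions $v$ on $\lambda$ with $v(\alpha)\in\alpha$ for all $\alpha\in\lambda$ and $\wedge v:=\bigcap_{\alpha\in\lambda}v(\alpha)\neq\emptyset$ (empty intersection meaning $X$). $F_\lambda$ is the simplicial complex (weak topology) with vertex set $N^{(0)}_\lambda$ in which $\{v_1,\dots,v_k\}$ spans a simplex iff $\wedge v_i\cap\wedge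 v_j\neq\emptyset$ for all $i,j$; $N_\lambda$ is its subcomplex with the same vertices in which $\{v_1,\dots,v_k\}$ spans a simplex iff $\bigcap_i\wedge v_i\neq\emptyset$. For $\lambda\subset\mu$, $\pi^\mu_\lambda:F_\mu\to F_\lambda$ is the simplicial map sending each vertex $v$ to its restriction $v|_\lambda$; it maps $N_\mu$ into $N_\lambda$. *)

(* Defs.v *)
From HB Require Import structures.
From mathcomp Require Import all_boot all_order all_algebra.
From mathcomp Require Import all_classical all_reals all_analysis.
From mathcomp Require Import Rstruct Rstruct_topology.
Set Implicit Arguments. Unset Strict Implicit. Unset Printing Implicit Defensive.
Import Order.TTheory GRing.Theory Num.Theory.
Local Open Scope classical_set_scope.
Local Open Scope ring_scope.

Notation Real := Rdefinitions.R.

Section Defs.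
Variable X : topologicalType.

Definition tychonoff_space : Prop :=
  completely_regular_space X /\ hausdorff_space X.

Definition locally_finite_family (al : set (set X)) : Prop :=
  forall x : X, exists2 U, nbhs x U &
    finite_set [set V | al V /\ V `&` U !=set0].

Definition covers (al : set (set X)) : Prop := \bigcup_(V in al) V = setT.

Definition refines (al be : set (set X)) : Prop :=
  forall V, al V -> exists2 W, be W & V `<=` W.

Definition paracompact_space : Prop :=
  hausdorff_space X /\
  forall be : set (set X), (forall W, be W -> open W) -> covers be ->
    exists al : set (set X), [/\ (forall V, al V -> open V), covers al,
                                 locally_finite_family al & refines al be].

Definition compatible_uniformity (U : set (set (X * X))) : Prop :=
  [/\ U setT,
      (forall E F, U E -> E `<=` F -> U F),
      (forall E F, U E -> U F -> U (E `&` F)) &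
      (forall E, U E -> forall x, E (x, x))] /\
  [/\
      (forall E, U E -> U [set p | E (p.2, p.1)]),
      (forall E, U E -> exists2 D, U D &
          forall x y z, D (x, y) -> D (y, z) -> E (x, z)) &
      (forall (x : X) (A : set X),
          nbhs x A <-> exists2 E, U E & [set y | E (x, y)] `<=` A)].

(** The finest (universal) uniformity: the supremum of all compatible
    uniformities; a filter is Cauchy for it iff it contains, for every
    entourage [E] of every compatible uniformity, a set [A] with
    [A x A] included in [E]. *)
Definition fine_cauchy (F : set_system X) : Prop :=
  forall U, compatible_uniformity U -> forall E, U E ->
    exists2 A, F A & forall x y, A x -> A y -> E (x, y).

Definition topologically_complete : Prop :=
  tychonoff_space /\
  forall F : set_system X, ProperFilter F -> fine_cauchy F ->
    exists x : X, F --> x.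

(** A partition of unity [phi] subordinated to [al] as in the paper:
    continuous [phi V : X -> [0,1]] for [V] in [al], with
    cl(phi_V^{-1}((0,1])) in int V and sum_V phi_V = 1 (the sum being
    pointwise finite: only finitely many phi_V are nonzero at each x). *)
Definition partition_of_unity (al : set (set X)) (phi : set X -> X -> Real)
  : Prop :=
  [/\ (forall V, al V -> continuous (phi V)),
      (forall V, al V -> forall x, 0 <= phi V x <= 1),
      (forall V, al V ->
          closure [set x | 0 < phi V x] `<=` interior V) &
      (forall x : X, exists s : seq (set X),
          [/\ uniq s, (forall V, V \in s -> al V),
              (forall V, al V -> V \notin s -> phi V x = 0) &
              \sum_(V <- s) phi V x = 1])].

Definition closed_lf_normal_cover (al : set (set X)) : Prop :=
  [/\ (forall V, al V -> closed V), covers al, locally_finite_family al &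
      exists phi, partition_of_unity al phi].

(** [lam : set (set (set X))] is a finite set of covers (an element of
    Lambda).  A vertex of F_lambda (= of N_lambda) is a function [v]
    choosing [v al \in al] for each [al \in lam] with nonempty meet.
    Outside [lam] the values of [v] are irrelevant. *)
Definition meet (lam : set (set (set X))) (v : set (set X) -> set X)
  : set X := [set x | forall al, lam al -> v al x].

Definition is_vertex (lam : set (set (set X))) (v : set (set X) -> set X)
  : Prop := (forall al, lam al -> al (v al)) /\ meet lam v !=set0.

Definition F_simplex (lam : set (set (set X)))
  (s : seq (set (set X) -> set X)) : Prop :=
  s <> [::] /\ (forall v, v \in s -> is_vertex lam v) /\
  (forall v w, v \in s -> w \in s -> meet lam v `&` meet lam w !=set0).

Definition N_simplex (lam : set (set (set X)))
  (s : seq (set (set X) -> set X)) : Prop :=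
  s <> [::] /\ (forall v, v \in s -> is_vertex lam v) /\
  [set x | forall v, v \in s -> meet lam v x] !=set0.

(** Restriction v |-> v|_lam (canonical representative: empty outside lam).
    This is the vertex map of the simplicial map pi^mu_lam. *)
Definition restr (lam : set (set (set X))) (v : set (set X) -> set X)
  : set (set X) -> set X :=
  fun al => if `[< lam al >] then v al else set0.

Definition pi_F_into_N (mu lam : set (set (set X))) : Prop :=
  forall s, F_simplex mu s -> N_simplex lam (map (restr lam) s).

End Defs.

(* Main.v *)
Require Import Defs.
From HB Require Import structures.
From mathcomp Require Import all_boot all_order all_algebra.
From mathcomp Require Import all_classical all_reals all_analysis.
From mathcomp Require Import Rstruct Rstruct_topology.
Import Order.TTheory GRing.Theory Num.Theory.
Local Open Scope classical_set_scope.
Local Open Scope ring_scope.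
From mathcomp Require Import lra.
Section Topo.
Variable X : topologicalType.

Lemma nbhs_bigcap (x : X) (I : choiceType) (G : set I) (P : I -> set X) :
  finite_set G -> (forall i, G i -> nbhs x (P i)) ->
  nbhs x [set y | forall i, G i -> P i y].
Proof.
move=> finG hP.
have := @filter_bigI X I (fset_set G) P (nbhs x) _ _.
rewrite fset_setK //; apply => //.
  by move=> i; rewrite in_fset_set // inE; apply: hP.
Qed.

Lemma not_closure (V : set X) x : ~ closure V x ->
  exists2 B, nbhs x B & forall y, B y -> ~ V y.
Proof.
move=> ncl; apply: contrapT => nn; apply: ncl => B nB.
apply: contrapT => h; apply: nn; exists B => // y By Vy; apply: h; exists y.
by [].
Qed.

Lemma lf_sub (F G : set (set X)) : G `<=` F ->
  locally_finite_family F -> locally_finite_family G.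
Proof.
move=> GF lfF x; have [U Ux finU] := lfF x; exists U => //.
by apply: sub_finite_set finU => V [GV VU]; split => //; apply: GF.
Qed.

Lemma lf_closure (F : set (set X)) : locally_finite_family F ->
  closure (\bigcup_(V in F) V) `<=` \bigcup_(V in F) closure V.
Proof.
move=> lfF x clx; apply: contrapT => nx.
have [U Ux finG] := lfF x.
have nb : nbhs x [set y | forall V, [set V | F V /\ V `&` U !=set0] V -> 
          (fun V => [set y | ~ V y]) V y].
  apply: nbhs_bigcap => // V [FV _].
  have : ~ closure V x by move=> c; apply: nx; exists V.
  case/not_closure => B nB BV; exact: filterS nB.
have [y [[V FV Vy] [/= ny Uy]]] := clx _ (filterI nb Ux).
by apply: (ny V) => //; split => //; exists y.
Qed.

Lemma cover_pt (al : set (set X)) x : covers al -> exists2 V, al V & V x.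
Proof.
move=> cov; have : (\bigcup_(V in al) V) x by rewrite cov.
by case=> V alV Vx; exists V.
Qed.

Lemma sep (hp : paracompact_space X) (C D : set X) : closed C ->
  (forall y, C y -> exists V : set X, [/\ open V, V y & closure V `&` D = set0]) ->
  exists E : set X, [/\ open E, C `<=` E & closure E `&` D = set0].
Proof.
move=> clC hV; case: hp => _ hp.
pose be := [set W : set X | (open W /\ closure W `&` D = set0) \/ W = ~` C].
have h1 : forall W, be W -> open W.
  by move=> W [[]//|->]; exact: closed_openC.
have h2 : covers be.
  rewrite /covers; apply/seteqP; split => // y _.
  have [Cy|nCy] := pselect (C y).
    by have [V [oV Vy cV]] := hV y Cy; exists V => //; left.
  by exists (~` C) => //; right.
have [al [opal coval lfal ref]] := hp be h1 h2.
pose G := [set V | al V /\ V `&` C !=set0].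
exists (\bigcup_(V in G) V); split.
- by apply: bigcup_open => V [alV _]; apply: opal.
- move=> y Cy; have [V alV Vy] := @cover_pt _ y coval.
  by exists V => //; split => //; exists y.
- have lfG : locally_finite_family G by apply: lf_sub lfal => V [].
  apply/seteqP; split => // z [/(@lf_closure G lfG) [V [alV [c [Vc Cc]]] clV] Dz].
  have [W beW VW] := ref V alV.
  case: beW => [[oW WD]|WC].
    have : (closure W `&` D) z by split => //; apply: (closureS VW).
    by rewrite WD.
  by rewrite WC in VW; have := VW c Vc.
Qed.

Lemma reg (hp : paracompact_space X) (x : X) (O : set X) : open O -> O x ->
  exists N : set X, [/\ open N, N x & closure N `<=` O].
Proof.
move=> oO Ox.
have hs : hausdorff_space X by case: hp.
have [|E [oE CE clE]] := @sep hp (~` O) [set x] (open_closedC oO).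
  move=> y nOy; have xy : x != y by apply/eqP => xy; rewrite -xy in nOy.
  move: hs; rewrite open_hausdorff => /(_ x y xy) [[A B] /= [xA yB] [oA oB AB0]].
  exists B; split => //; first by move: yB; rewrite inE.
  apply/seteqP; split => // z [clz /= zx]; rewrite zx in clz.
  have := clz A; rewrite /= => /(_ _) [].
    by apply: open_nbhs_nbhs; split => //; move: xA; rewrite inE.
  by move=> w [Bw Aw]; move/eqP: AB0 => AB0; have : (A `&` B) w by []; rewrite AB0.
exists (~` closure E); split.
- exact/closed_openC/closed_closure.
- by move=> clEx; have : (closure E `&` [set x]) x by []; rewrite clE.
- have ncE : closed (~` E) by exact: open_closedC.
  have sub : ~` closure E `<=` ~` E by apply: subsetC; exact: subset_closure.
  move=> z /(closureS sub) /ncE nEz; apply: contrapT => nOz; exact: nEz (CE _ nOz).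
Qed.

Lemma normalX (hp : paracompact_space X) : normal_space X.
Proof.
apply/(@normal_openP Rdefinitions.R) => A B clA clB AB0.
have [|E [oE BE clE]] := @sep hp B A clB.
  move=> y By.
  have nAy : (~` A) y by move=> Ay; have : (A `&` B) y by []; rewrite AB0.
  have [N [oN Ny clN]] := @reg hp y (~` A) (closed_openC clA) nAy.
  exists N; split => //; apply/seteqP; split => // z [/clN nAz Az]; exact: nAz.
exists (~` closure E), E; split => //.
- exact/closed_openC/closed_closure.
- by move=> z Az clz; have : (closure E `&` A) z by []; rewrite clE.
- apply/seteqP; split => // z [nz Ez]; apply: nz; exact: subset_closure.
Qed.

End Topo.

Section Topo2.
Variable X : topologicalType.

Definition lfp (O H : set (set X)) (f : set X -> X -> Rdefinitions.R) : Prop :=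
 [/\ locally_finite_family H, refines H O,
     (forall h, H h -> [/\ continuous (f h), (forall x, 0 <= f h x <= 1) &
                          (forall x, ~ h x -> f h x = 0)]) &
     (forall x, exists2 h, H h & f h x = 1)].

Lemma lfp_exists (hp : paracompact_space X) (O : set (set X)) :
  (forall W, O W -> open W) -> covers O -> exists H f, lfp O H f.
Proof.
move=> oO cO; have hp' := hp; case: hp' => _ hpc.
have [HH [oH cH lfH rH]] := hpc O oO cO.
pose NN := [set N : set X | open N /\ exists2 h, HH h & closure N `<=` h].
have oN : forall N, NN N -> open N by move=> N [].
have cN : covers NN.
  apply/seteqP; split => // x _.
  have [h Hh hx] := @cover_pt X HH x cH.
  have [N [oN' Nx clN]] := @reg X hp x h (oH h Hh) hx.
  by exists N => //; split => //; exists h.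
have [KK [oK cK lfK rK]] := hpc NN oN cN.
pose C (h : set X) := closure (\bigcup_(K in [set K | KK K /\ closure K `<=` h]) K).
have Ch : forall h, C h `<=` h.
  move=> h z /(@lf_closure X [set K | KK K /\ closure K `<=` h]) [].
    by apply: lf_sub lfK => K [].
  by move=> K [_ Kh] /Kh.
pose f (h : set X) := @Urysohn X Rdefinitions.R (~` h) (C h).
have us : forall h, HH h -> uniform_separator (~` h) (C h).
  move=> h Hh; have := (proj1 (@normal_separatorP Rdefinitions.R X) (@normalX X hp)).
  move=> /(_ (~` h) (C h)); apply.
  - exact: open_closedC (oH h Hh).
  - exact: closed_closure.
  - by apply/seteqP; split => // z [nz /Ch].
exists HH, f; split => //.
- move=> h Hh; split.
  + exact: Urysohn_continuous.
  + move=> x; have : [set` `[0, 1]] (f h x) by apply: Urysohn_range; exists x.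
    by rewrite /= in_itv /=.
  + move=> x nx; apply: (@Urysohn_sub0 X Rdefinitions.R _ _ (us h Hh)).
    by exists x.
- move=> x; have [K KK' Kx] := @cover_pt X KK x cK.
  have [N [_ [h Hh clN]] KN] := rK K KK'.
  exists h => //; apply: (@Urysohn_sub1 X Rdefinitions.R _ _ (us h Hh)).
  exists x => //; apply: subset_closure; exists K => //; split => //.
  by move=> z /(closureS KN) /clN.
Qed.

End Topo2.

Section Topo3.
Variable X : topologicalType.

Lemma star_ref (O HH : set (set X)) f : @lfp X O HH f ->
  exists VV : set (set X), [/\ (forall V, VV V -> open V), covers VV &
    forall V1, VV V1 -> exists2 W, O W &
      forall V, VV V -> V `&` V1 !=set0 -> V `<=` W].
Proof.
case=> lfH rH hf h1.
pose Vw (w : X) := interior [set y | forall h, HH h -> `|f h y - f h w| < 1/4].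
have Vww : forall w, Vw w w.
  move=> w; have [U Uw finU] := lfH w.
  have nb : nbhs w [set y | forall h, [set h | HH h /\ h `&` U !=set0] h ->
                (fun h => [set y | `|f h y - f h w| < 1/4]) h y].
    apply: nbhs_bigcap => // h [Hh _]; have [ch _ _] := hf h Hh.
    have q : (0:Rdefinitions.R) < 1/4 by lra.
    have := (@cvgr_distC_lt Rdefinitions.R Rdefinitions.R^o _ (nbhs w) _ (f h) (f h w) (ch w) (1/4) q).
    exact.
  rewrite /Vw /interior /=; apply: filterS (filterI nb Uw) => y [/= ny Uy] h Hh.
  have [hU|nhU] := pselect (h `&` U !=set0); first exact: ny.
  have [_ _ z0] := hf h Hh.
  have zy : f h y = 0 by apply: z0 => hy; apply: nhU; exists y.
  have zw : f h w = 0.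
    apply: z0 => hw; apply: nhU; exists w; split => //; exact: nbhs_singleton.
  rewrite zy zw subrr normr0; lra.
exists (range Vw); split.
- by move=> V [w _ <-]; exact: open_interior.
- by apply/seteqP; split => // w _; exists (Vw w) => //; exists w.
- move=> V1 [w1 _ <-]; have [h Hh fh1] := h1 w1.
  have [W OW hW] := rH h Hh; exists W => // V [w _ <-] [p [pw pw1]] z zw.
  apply: hW; apply: contrapT => nhz.
  have [_ _ z0] := hf h Hh.
  have := interior_subset pw1 h Hh; have := interior_subset pw h Hh.
  have := interior_subset zw h Hh; rewrite z0 // fh1.
  rewrite !ltr_norml => /andP[? ?] /andP[? ?] /andP[? ?]; lra.
Qed.

End Topo3.

Section Topo4.
Variable X : topologicalType.
Local Notation R := Rdefinitions.R.

Lemma cont_loc (f : X -> R) : (forall x, exists2 U, nbhs x U &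
  exists2 g : X -> R, {for x, continuous g} & forall y, U y -> f y = g y) ->
  continuous f.
Proof.
move=> h x; have [U Ux [g cg fg]] := h x.
rewrite /continuous_at (fg x (nbhs_singleton Ux)).
apply: cvg_trans cg; apply: near_eq_cvg.
by apply: filterS Ux => y /fg ->.
Qed.

Lemma cont_sum (I : eqType) (s : seq I) (P : pred I) (F : I -> X -> R) :
  (forall i, i \in s -> continuous (F i)) ->
  continuous (fun y => \sum_(i <- s | P i) F i y).
Proof.
elim: s => [|i s IH] cF.
  under eq_fun do rewrite big_nil. by move=> x; exact: cvg_cst.
have cF' : forall j, j \in s -> continuous (F j).
  by move=> j js; apply: cF; rewrite in_cons js orbT.
under eq_fun do rewrite big_cons.
case: (P i) => //= x; last exact: IH.
apply: (@cvgD _ R^o); [apply: cF; exact: mem_head | exact: IH].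
Qed.

Lemma cont_k (g : X -> R) : continuous g ->
  continuous (fun y => Num.max 0 (3 * g y - 2)).
Proof.
move=> cg.
pose m := fun r : R => Num.max 0 (3 * r - 2).
have cm : continuous (m : R^o -> R^o).
  move=> r; apply: (@continuous_max R R^o (fun=> 0) (fun r : R^o => 3 * r - 2) r).
    exact: cvg_cst.
  apply: cvgB; last exact: cvg_cst.
  apply: cvgM; [exact: cvg_cst | exact: cvg_id].
move=> x; exact: (continuous_comp (cg x) (cm (g x))).
Qed.


Lemma loc_sum (HH : set (set X)) (k : set X -> X -> R) :
  locally_finite_family HH -> (forall h y, HH h -> ~ h y -> k h y = 0) ->
  forall x : X, exists2 U, nbhs x U & exists s : seq (set X),
  [/\ uniq s, (forall h, h \in s -> HH h),
      (forall h, HH h -> h `&` U !=set0 -> h \in s) &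
      forall y, U y -> forall P, P `<=` HH ->
        \sum_(h \in P) k h y = \sum_(h <- s | `[< P h >]) k h y].
Proof.
move=> lfH k0 x; have [U Ux finU] := lfH x; exists U => //.
set G := [set h | HH h /\ h `&` U !=set0] in finU *.
have memG : forall h, (h \in finmap.enum_fset (fset_set G)) = `[< G h >].
  move=> h; exact: (in_fset_set finU h).
exists (finmap.enum_fset (fset_set G)); split.
- exact: finmap.fset_uniq.
- by move=> h; rewrite memG => /asboolP [].
- by move=> h Hh hU; rewrite memG; apply/asboolP.
- move=> y Uy P PH; rewrite [RHS]bigfs; last 2 first.
  + exact: finmap.fset_uniq.
  + move=> h /asboolP Ph; rewrite memG => /asboolP nG; apply: k0; first exact: PH.
    by move=> hy; apply: nG; split; [exact: PH | exists y].
  congr (\big[_/_]_(i \in _) _); apply/seteqP; split => h /=.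
    by move/asboolP.
  by move=> Ph; apply/asboolP.
Qed.

End Topo4.

Section Topo5.
Variable X : topologicalType.
Local Notation R := Rdefinitions.R.

Lemma lfp_normal (O HH : set (set X)) f : @lfp X O HH f ->
  exists be, closed_lf_normal_cover be /\ refines be HH.
Proof.
case=> lfH rH hf h1.
pose B h := [set x : X | 1/2 <= f h x].
pose be := [set V | exists2 h, HH h & V = B h].
pose k h y := Num.max 0 (3 * f h y - 2) : R.
have k0 : forall h y, HH h -> ~ h y -> k h y = 0.
  move=> h y Hh nhy; have [_ _ z0] := hf h Hh; rewrite /k z0 //.
  by apply/max_idPl; lra.
have kge0 : forall h y, 0 <= k h y by move=> h y; rewrite /k le_max lexx.
have kpos : forall h y, 0 < k h y -> 2/3 <= f h y.
  by move=> h y; rewrite /k lt_max ltxx /= => ?; lra.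
have k1 : forall h y, f h y = 1 -> k h y = 1.
  move=> h y e; rewrite /k e; have -> : 3 * 1 - 2 = 1 :> R by lra.
  by apply/max_idPr; lra.
have kc : forall h, HH h -> continuous (k h).
  by move=> h Hh; have [c _ _] := hf h Hh; exact: cont_k.
have Bh : forall h, HH h -> B h `<=` h.
  move=> h Hh y By; apply: contrapT => nhy; have [_ _ z0] := hf h Hh.
  by move: By; rewrite /B /= z0 //; lra.
have loc := @loc_sum X HH k lfH k0.
pose K y := \sum_(h \in HH) k h y.
have Kge1 : forall y, 1 <= K y.
  move=> y; have [U Uy [s [us sH Hs e]]] := loc y.
  rewrite /K (e y (nbhs_singleton Uy) HH) //.
  have [h0 Hh0 fh0] := h1 y.
  have h0s : h0 \in s.
    apply: Hs => //; exists y; split; last exact: nbhs_singleton.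
    by apply: contrapT => nh; have [_ _ z0] := hf h0 Hh0; move: fh0; rewrite z0 // => /eqP; rewrite eq_sym oner_eq0.
  rewrite big_mkcond (bigD1_seq h0) //= asboolT // k1 //.
  rewrite lerDl; apply: sumr_ge0 => i _; case: ifP => // _; exact: kge0.
pose phi V y := (\sum_(h \in [set h | HH h /\ B h = V]) k h y) / K y.
exists be; split; last first.
  by move=> V [h Hh ->]; exists h => //; exact: Bh.
split.
- move=> V [h Hh ->]; have [c _ _] := hf h Hh.
  apply: (@closed_comp _ _ (f h) [set r : R | 1/2 <= r]).
    by move=> y _; exact: c.
  exact: closed_ge.
- apply/seteqP; split => // x _; have [h Hh fh] := h1 x.
  by exists (B h); [exists h | rewrite /B /= fh; lra].
- move=> x; have [U Ux finU] := lfH x; exists U => //.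
  apply: sub_finite_set (finite_image B finU).
  move=> V [[h Hh ->] [y [By Uy]]]; exists h => //; split => //.
  by exists y; split => //; exact: Bh.
- exists phi; split.
  + move=> V _; apply: cont_loc => x.
    have [U Ux [s [us sH Hs e]]] := loc x; exists U => //.
    exists (fun y => (\sum_(h <- s | `[< [set h | HH h /\ B h = V] h >]) k h y) /
                    (\sum_(h <- s | `[< HH h >]) k h y)).
      have Kx : \sum_(h <- s | `[< HH h >]) k h x != 0.
        rewrite -(e x (nbhs_singleton Ux) HH) //; apply: lt0r_neq0.
        exact: lt_le_trans ltr01 (Kge1 x).
      have ck : forall h, h \in s -> continuous (k h) by move=> h /sH; exact: kc.
      apply: cvgM; first exact: cont_sum.
      apply: cvgV => //; exact: cont_sum.
    move=> y Uy; rewrite /phi /K !(e y Uy) //; by move=> h [].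
  + move=> V _ y; have [U Uy [s [us sH Hs e]]] := loc y.
    have Kp : 0 < K y by exact: lt_le_trans ltr01 (Kge1 y).
    rewrite /phi; apply/andP; split.
      apply: divr_ge0; last exact: ltW.
      by apply: fsumr_ge0 => h _; exact: kge0.
    rewrite ler_pdivrMr // mul1r /K !(e y (nbhs_singleton Uy)) //; last by move=> h [].
    rewrite [X in X <= _]big_mkcond [X in _ <= X]big_mkcond /=.
    apply: ler_sum => h _.
    case: (asboolP ([set h | HH h /\ B h = V] h)) => [[Hh _]|_].
      by rewrite asboolT.
    by case: ifP => // _; exact: kge0.
  + move=> V [h0 Hh0 ->].
    pose TT := [set S : set X | exists2 h, HH h /\ B h = B h0 &
                  S = [set y | 2/3 <= f h y]].
    have sub : [set y | 0 < phi (B h0) y] `<=` \bigcup_(S in TT) S.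
      move=> y py; apply: contrapT => nT.
      suff : phi (B h0) y = 0 by move=> p0; move: py; rewrite /= p0 ltxx.
      have [U Uy [s [us sH Hs e]]] := loc y.
      rewrite /phi (e y (nbhs_singleton Uy)); last by move=> h [].
      rewrite big1_seq ?mul0r // => i /andP [/asboolP [Hi Bi] _].
      apply: contrapT => nk; apply: nT; exists [set y | 2/3 <= f i y].
        by exists i.
      apply: kpos; have := kge0 i y; rewrite le_eqVlt => /orP [/eqP e0|//].
      by rewrite e0 in nk.
    have lfT : locally_finite_family TT.
      move=> x; have [U Ux finU] := lfH x; exists U => //.
      apply: sub_finite_set (finite_image (fun h => [set y | 2/3 <= f h y]) finU).
      move=> S [[h [Hh _] ->] [y [fy Uy]]]; exists h => //; split => //.
      exists y; split => //; apply: Bh => //; move: fy; rewrite /B /=; lra.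
    move=> z /(closureS sub) /(@lf_closure X TT lfT) [S [h [Hh Bhh] ->]] clS.
    have cS : closed [set y | 2/3 <= f h y].
      have [c _ _] := hf h Hh.
      apply: (@closed_comp _ _ (f h) [set r : R | 2/3 <= r]).
        by move=> y _; exact: c.
      exact: closed_ge.
    have fz : 2/3 <= f h z by have := cS z clS.
    rewrite -Bhh /interior /=.
    have [c _ _] := hf h Hh.
    have oS : open (f h @^-1` [set r : R | 1/2 < r]).
      by apply: open_comp; [move=> y _; exact: c | exact: open_gt].
    apply: filterS (open_nbhs_nbhs (conj oS _)) => /=.
      by move=> y; rewrite /B /=; lra.
    rewrite /=; lra.
  + move=> x; have [U Ux [s [us sH Hs e]]] := loc x.
    have ex := e x (nbhs_singleton Ux).
    exists (undup (map B s)); split.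
    * exact: undup_uniq.
    * by move=> V; rewrite mem_undup => /mapP [h hs ->]; exists h => //; exact: sH.
    * move=> V _ nV; rewrite /phi ex; last by move=> h [].
      rewrite big1_seq ?mul0r // => i /andP [/asboolP [Hi Bi] iS].
      by move: nV; rewrite -Bi mem_undup map_f.
    * have Kp : 0 < K x by exact: lt_le_trans ltr01 (Kge1 x).
      rewrite /phi -mulr_suml.
      have -> : \sum_(V <- undup (map B s))
                 \sum_(h \in [set h | HH h /\ B h = V]) k h x = K x.
        rewrite /K ex //.
        have eN : forall V, \sum_(h \in [set h | HH h /\ B h = V]) k h x =
                   \sum_(h <- s) (if B h == V then k h x else 0).
          move=> V; rewrite ex; last by move=> h [].
          rewrite big_mkcond; apply: eq_big_seq => h hs.
          case: (B h =P V) => [BV|nBV].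
            by rewrite asboolT //; split => //; exact: sH.
          by rewrite asboolF // => -[].
        under eq_bigr do rewrite eN.
        rewrite exchange_big /= [RHS]big_mkcond; apply: eq_big_seq => h hs.
        rewrite asboolT; last exact: sH.
        rewrite (bigD1_seq (B h)) ?undup_uniq ?mem_undup ?map_f //= eqxx.
        rewrite big1 ?addr0 // => V; rewrite eq_sym => /negbTE ->; by [].
      by rewrite mulfV // lt0r_neq0.
Qed.

End Topo5.


Lemma refines_trans (X : topologicalType) (a b c : set (set X)) :
  refines a b -> refines b c -> refines a c.
Proof.
move=> ab bc V aV; have [W bW VW] := ab V aV; have [Z cZ WZ] := bc W bW.
by exists Z => // y /VW /WZ.
Qed.

Local Close Scope ring_scope.
Theorem theorem2p6 (X : topologicalType)
  (A : set (set (set X)))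
  (hpara : paracompact_space X)
  (hcompl : topologically_complete X)
  (hA : forall al, A al -> closed_lf_normal_cover al)
  (hcof : forall be, closed_lf_normal_cover be ->
            exists2 al, A al & refines al be) :
  forall lam : set (set (set X)), finite_set lam -> lam `<=` A ->
    exists mu : set (set (set X)),
      [/\ finite_set mu, mu `<=` A, lam `<=` mu & pi_F_into_N mu lam].
Proof.
move=> lam finlam lamA.
pose Ux (x : X) := [set y | forall al, lam al -> forall V, al V -> V y -> V x].
have oUx : forall x, open (Ux x).
  move=> x; rewrite openE => y Uy.
  pose W al := ~` \bigcup_(V in [set V | al V /\ ~ V x]) V.
  have : nbhs y [set z | forall al, lam al -> W al z].
    apply: nbhs_bigcap => // al lal.
    have [clal _ lfal _] := hA al (lamA al lal).
    apply: open_nbhs_nbhs; split.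
      apply: closed_openC => z.
      move=> /(@lf_closure X [set V | al V /\ ~ V x]) [].
        by apply: lf_sub lfal => V [].
      move=> V [alV nVx] clV; exists V => //; exact: clal.
    by move=> [V [alV nVx] Vy]; apply: nVx; exact: Uy al lal V alV Vy.
  apply: filterS => z Wz al lal V alV Vz; apply: contrapT => nVx.
  by apply: (Wz al lal); exists V.
pose OO := range Ux.
have oOO : forall W, OO W -> open W by move=> W [x _ <-].
have cOO : covers OO.
  by apply/seteqP; split => // x _; exists (Ux x); [exists x | move=> al _ V _].
have [HH [f lf1]] := @lfp_exists X hpara _ oOO cOO.
have [VV [oVV cVV stVV]] := @star_ref X _ _ _ lf1.
have [HH2 [f2 lf2]] := @lfp_exists X hpara _ oVV cVV.
have [be [cbe rbe]] := @lfp_normal X _ _ _ lf2.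
have rHV : refines HH2 VV by case: lf2.
have [al0 Aal0 ral0] := hcof be cbe.
have rV := @refines_trans X _ _ _ (@refines_trans X _ _ _ ral0 rbe) rHV.
exists (lam `|` [set al0]); split.
- by rewrite finite_setU; split => //; exact: finite_set1.
- by move=> al [/lamA //|->].
- by move=> al lal; left.
- move=> s [sne [sv pw]].
  case: s sne sv pw => [//|w1 s] _ sv pw.
  have w1v : is_vertex (lam `|` [set al0]) w1 by apply: sv; exact: mem_head.
  have [V1 VV1 W1V1] := rV (w1 al0) (proj1 w1v al0 (or_intror erefl)).
  have [W0 [x0 _ <-] stO] := stVV V1 VV1.
  have key : forall v, v \in w1 :: s -> meet lam (restr lam v) x0.
    move=> v vs al lal; rewrite /restr asboolT //.
    have [p [p1 pv]] := pw w1 v (mem_head _ _) vs.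
    have vv : is_vertex (lam `|` [set al0]) v by exact: sv.
    have [V VV0 WV] := rV (v al0) (proj1 vv al0 (or_intror erefl)).
    have VO : V `<=` Ux x0.
      apply: stO => //; exists p; split.
        by apply: WV; exact: pv al0 (or_intror erefl).
      by apply: W1V1; exact: p1 al0 (or_intror erefl).
    exact: (VO p (WV p (pv al0 (or_intror erefl))) al lal (v al)
      ((proj1 vv) al (or_introl lal)) (pv al (or_introl lal))).
  split => //; split.
    move=> v /mapP [w ws ->]; have [wal [p pw']] := sv w ws; split.
      by move=> al lal; rewrite /restr asboolT //; apply: wal; left.
    by exists p => al lal; rewrite /restr asboolT //; apply: pw'; left.
  by exists x0 => v /mapP [w ws ->]; exact: key.
Qed.
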